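(* If $\delta>\frac{\pi^2}{4}-1$, then $F_1^{-1}(\alpha)>F_2(\alpha;\delta)$ for every $\alpha\in(0,1)$.
   Context: Real-valued maps: for $\alpha\in[0,1]$, $\sigma^2\ge0$ (with $\sigma=\sqrt{\sigma^2}$, $\arctan(\alpha/0)=\pi/2$ for $\alpha>0$), $\psi_2(\alpha,\sigma^2;\delta)=\frac1\delta\big[\alpha^2+\sigma^2+1-\frac{4\sigma}\pi-\frac{4\alpha}\pi\arctan(\alpha/\sigma)\big]$. For $\alpha\in(0,1)$ let $F_1^{-1}(\alpha):=\alpha^2\cot^2(\pi\alpha/2)$ (the value of $\sigma^2$ for which $\alpha$ is the positive fixed point of $\alpha\mapsto\frac2\pi\arctan(\alpha/\sigma)$). For $\delta>1$ and $\alpha\in[0,1]$, $F_2(\alpha;\delta)$ denotes the unique solution $\sigma^2\in[0,\infty)$ of $\sigma^2=\psi_2(\alpha,\sigma^2;\delta)$ (existence and uniqueness are known). *)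

(* Defs.v *)
From Stdlib Require Import Reals Lra ClassicalEpsilon.
Open Scope R_scope.

Definition atan_ratio (a s : R) : R :=
  if Req_EM_T s 0 then PI / 2 else atan (a / s).

Definition psi2 (alpha sigma2 delta : R) : R :=
  let sigma := sqrt sigma2 in
  / delta * (alpha ^ 2 + sigma2 + 1 - 4 * sigma / PI
             - 4 * alpha / PI * atan_ratio alpha sigma).

Definition F1inv (alpha : R) : R :=
  alpha ^ 2 * (/ tan (PI * alpha / 2)) ^ 2.

(* F_2(alpha; delta): the (unique) sigma^2 >= 0 with sigma^2 = psi2(alpha, sigma^2; delta),
   picked by Hilbert's epsilon (existence/uniqueness known for delta > 1, alpha in [0,1]). *)
Definition F2 (alpha delta : R) : R :=
  epsilon (inhabits 0) (fun s => 0 <= s /\ s = psi2 alpha s delta).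

(* Main.v *)
Require Import Defs.
From Stdlib Require Import Reals Lra Factorial ClassicalEpsilon.
Open Scope R_scope.

Lemma posQA_0 : forall x, (0) <= x <= (1) -> 0 < (1075773/50000000) + (-91955147/4500000000)*x + (63985049/10500000000)*x^2 + (-21162117511/30240000000000)*x^3 + (29908982633/544320000000000)*x^4 + (-41956876639/15240960000000000)*x^5 + (2448924227/30481920000000000)*x^6 + (-14646772681/13168189440000000000)*x^7 + (1/131681894400)*x^8.
Proof. intros x Hx.
assert (E : (1075773/50000000) + (-91955147/4500000000)*x + (63985049/10500000000)*x^2 + (-21162117511/30240000000000)*x^3 + (29908982633/544320000000000)*x^4 + (-41956876639/15240960000000000)*x^5 + (2448924227/30481920000000000)*x^6 + (-14646772681/13168189440000000000)*x^7 + (1/131681894400)*x^8 = (1075773/50000000) + (-91955147/4500000000)*(x - (0)) + (63985049/10500000000)*(x - (0))^2 + (-21162117511/30240000000000)*(x - (0))^3 + (29908982633/544320000000000)*(x - (0))^4 + (-41956876639/15240960000000000)*(x - (0))^5 + (2448924227/30481920000000000)*(x - (0))^6 + (-14646772681/13168189440000000000)*(x - (0))^7 + (1/131681894400)*(x - (0))^8) by field.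
rewrite E; clear E.
set (y := x - (0)). assert (Hy0 : 0 <= y) by (unfold y; lra). assert (Hy1 : y <= (1)) by (unfold y; lra).
assert (0 <= y^2) by (apply pow_le; lra).
assert (y^3 <= (1)) by (apply Rle_trans with ((1)^3); [apply pow_incr; lra | simpl; lra]).
assert (0 <= y^4) by (apply pow_le; lra).
assert (y^5 <= (1)) by (apply Rle_trans with ((1)^5); [apply pow_incr; lra | simpl; lra]).
assert (0 <= y^6) by (apply pow_le; lra).
assert (y^7 <= (1)) by (apply Rle_trans with ((1)^7); [apply pow_incr; lra | simpl; lra]).
assert (0 <= y^8) by (apply pow_le; lra).
lra. Qed.

Lemma posQA : forall x, (0) <= x <= (1) -> 0 < (1075773/50000000) + (-91955147/4500000000)*x + (63985049/10500000000)*x^2 + (-21162117511/30240000000000)*x^3 + (29908982633/544320000000000)*x^4 + (-41956876639/15240960000000000)*x^5 + (2448924227/30481920000000000)*x^6 + (-14646772681/13168189440000000000)*x^7 + (1/131681894400)*x^8.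
Proof. intros x Hx.
apply posQA_0; lra. Qed.

Lemma posRA_0 : forall x, (0) <= x <= (1) -> 0 < (1/3) + (-1/30)*x + (1/840)*x^2 + (1/362880)*x^3.
Proof. intros x Hx.
assert (E : (1/3) + (-1/30)*x + (1/840)*x^2 + (1/362880)*x^3 = (1/3) + (-1/30)*(x - (0)) + (1/840)*(x - (0))^2 + (1/362880)*(x - (0))^3) by field.
rewrite E; clear E.
set (y := x - (0)). assert (Hy0 : 0 <= y) by (unfold y; lra). assert (Hy1 : y <= (1)) by (unfold y; lra).
assert (0 <= y^2) by (apply pow_le; lra).
assert (0 <= y^3) by (apply pow_le; lra).
lra. Qed.

Lemma posRA : forall x, (0) <= x <= (1) -> 0 < (1/3) + (-1/30)*x + (1/840)*x^2 + (1/362880)*x^3.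
Proof. intros x Hx.
apply posRA_0; lra. Qed.

Lemma posCL_0 : forall x, (0) <= x <= (1) -> 0 < (1) + (-1/2)*x + (1/24)*x^2 + (-1/720)*x^3.
Proof. intros x Hx.
assert (E : (1) + (-1/2)*x + (1/24)*x^2 + (-1/720)*x^3 = (1) + (-1/2)*(x - (0)) + (1/24)*(x - (0))^2 + (-1/720)*(x - (0))^3) by field.
rewrite E; clear E.
set (y := x - (0)). assert (Hy0 : 0 <= y) by (unfold y; lra). assert (Hy1 : y <= (1)) by (unfold y; lra).
assert (0 <= y^2) by (apply pow_le; lra).
assert (y^3 <= (1)) by (apply Rle_trans with ((1)^3); [apply pow_incr; lra | simpl; lra]).
lra. Qed.

Lemma posCL : forall x, (0) <= x <= (1) -> 0 < (1) + (-1/2)*x + (1/24)*x^2 + (-1/720)*x^3.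
Proof. intros x Hx.
apply posCL_0; lra. Qed.

Lemma posPB_0 : forall x, (0) <= x <= (5709/20000) -> 0 < (90057879453601/625000000000000) + (-77080343147/187500000000)*x + (780452195546399/1875000000000000)*x^2 + (-26633218951/187500000000)*x^3 + (-523717308046399/14062500000000000)*x^4 + (38156948073/1093750000000)*x^5 + (-402677529453601/196875000000000000)*x^6 + (-370127985581/118125000000000)*x^7 + (85129149057597641/189000000000000000000)*x^8 + (3181758226991/18900000000000000)*x^9 + (-6318086854453601/189000000000000000000)*x^10 + (-39129093817/6300000000000000)*x^11 + (24465775779453601/15876000000000000000000)*x^12 + (10845897331/75600000000000000)*x^13 + (-25893199/635040000000000)*x^14 + (-7849/4064256000000)*x^15 + (1/1625702400)*x^16.
Proof. intros x Hx.
assert (E : (90057879453601/625000000000000) + (-77080343147/187500000000)*x + (780452195546399/1875000000000000)*x^2 + (-26633218951/187500000000)*x^3 + (-523717308046399/14062500000000000)*x^4 + (38156948073/1093750000000)*x^5 + (-402677529453601/196875000000000000)*x^6 + (-370127985581/118125000000000)*x^7 + (85129149057597641/189000000000000000000)*x^8 + (3181758226991/18900000000000000)*x^9 + (-6318086854453601/189000000000000000000)*x^10 + (-39129093817/6300000000000000)*x^11 + (24465775779453601/15876000000000000000000)*x^12 + (10845897331/75600000000000000)*x^13 + (-25893199/635040000000000)*x^14 + (-7849/4064256000000)*x^15 + (1/1625702400)*x^16 = (90057879453601/625000000000000) + (-77080343147/187500000000)*(x - (0)) + (780452195546399/1875000000000000)*(x - (0))^2 + (-26633218951/187500000000)*(x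 - (0))^3 + (-523717308046399/14062500000000000)*(x - (0))^4 + (38156948073/1093750000000)*(x - (0))^5 + (-402677529453601/196875000000000000)*(x - (0))^6 + (-370127985581/118125000000000)*(x - (0))^7 + (85129149057597641/189000000000000000000)*(x - (0))^8 + (3181758226991/18900000000000000)*(x - (0))^9 + (-6318086854453601/189000000000000000000)*(x - (0))^10 + (-39129093817/6300000000000000)*(x - (0))^11 + (24465775779453601/15876000000000000000000)*(x - (0))^12 + (10845897331/75600000000000000)*(x - (0))^13 + (-25893199/635040000000000)*(x - (0))^14 + (-7849/4064256000000)*(x - (0))^15 + (1/1625702400)*(x - (0))^16) by field.
rewrite E; clear E.
set (y := x - (0)). assert (Hy0 : 0 <= y) by (unfold y; lra). assert (Hy1 : y <= (5709/20000)) by (unfold y; lra).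
assert (0 <= y^2) by (apply pow_le; lra).
assert (y^3 <= (186071615829/8000000000000)) by (apply Rle_trans with ((5709/20000)^3); [apply pow_incr; lra | simpl; lra]).
assert (y^4 <= (1062282854767761/160000000000000000)) by (apply Rle_trans with ((5709/20000)^4); [apply pow_incr; lra | simpl; lra]).
assert (0 <= y^5) by (apply pow_le; lra).
assert (y^6 <= (34622646217214963357241/64000000000000000000000000)) by (apply Rle_trans with ((5709/20000)^6); [apply pow_incr; lra | simpl; lra]).
assert (y^7 <= (197660687254080225806488869/1280000000000000000000000000000)) by (apply Rle_trans with ((5709/20000)^7); [apply pow_incr; lra | simpl; lra]).
assert (0 <= y^8) by (apply pow_le; lra).
assert (0 <= y^9) by (apply pow_le; lra).
assert (y^10 <= (36779043463237332689010568527932707401/10240000000000000000000000000000000000000000)) by (apply Rle_trans with ((5709/20000)^10); [apply pow_incr; lra | simpl; lra]).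
assert (y^11 <= (209971559131621932321561335725967826552309/204800000000000000000000000000000000000000000000)) by (apply Rle_trans with ((5709/20000)^11); [apply pow_incr; lra | simpl; lra]).
assert (0 <= y^12) by (apply pow_le; lra).
assert (0 <= y^13) by (apply pow_le; lra).
assert (y^14 <= (39069747285755313036608198954662378241455345820899161/1638400000000000000000000000000000000000000000000000000000000)) by (apply Rle_trans with ((5709/20000)^14); [apply pow_incr; lra | simpl; lra]).
assert (y^15 <= (223049187254377082125996207832167517380468569291513310149/32768000000000000000000000000000000000000000000000000000000000000)) by (apply Rle_trans with ((5709/20000)^15); [apply pow_incr; lra | simpl; lra]).
assert (0 <= y^16) by (apply pow_le; lra).
lra. Qed.

Lemma posPB_1 : forall x, (5709/20000) <= x <= (17127/40000) -> 0 < (90057879453601/625000000000000) + (-77080343147/187500000000)*x + (780452195546399/1875000000000000)*x^2 + (-26633218951/187500000000)*x^3 + (-523717308046399/14062500000000000)*x^4 + (38156948073/1093750000000)*x^5 + (-402677529453601/196875000000000000)*x^6 + (-370127985581/118125000000000)*x^7 + (85129149057597641/189000000000000000000)*x^8 + (3181758226991/18900000000000000)*x^9 + (-6318086854453601/189000000000000000000)*x^10 + (-39129093817/6300000000000000)*x^11 + (24465775779453601/15876000000000000000000)*x^12 + (10845897331/75600000000000000)*x^13 + (-25893199/635040000000000)*x^14 + (-7849/4064256000000)*x^15 + (1/1625702400)*x^16.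
Proof. intros x Hx.
assert (E : (90057879453601/625000000000000) + (-77080343147/187500000000)*x + (780452195546399/1875000000000000)*x^2 + (-26633218951/187500000000)*x^3 + (-523717308046399/14062500000000000)*x^4 + (38156948073/1093750000000)*x^5 + (-402677529453601/196875000000000000)*x^6 + (-370127985581/118125000000000)*x^7 + (85129149057597641/189000000000000000000)*x^8 + (3181758226991/18900000000000000)*x^9 + (-6318086854453601/189000000000000000000)*x^10 + (-39129093817/6300000000000000)*x^11 + (24465775779453601/15876000000000000000000)*x^12 + (10845897331/75600000000000000)*x^13 + (-25893199/635040000000000)*x^14 + (-7849/4064256000000)*x^15 + (1/1625702400)*x^16 = (752042433934125258595020944749577776040274428171311048154151459361501098249/13153337344000000000000000000000000000000000000000000000000000000000000000000) + (-51921053564228407583583187178865966968236204938295702847700139425877919/246625075200000000000000000000000000000000000000000000000000000000000000)*(x - (5709/20000)) + (1752197886774731847370136368869551799884703532282904559476224446191/6165626880000000000000000000000000000000000000000000000000000000000)*(x - (5709/20000))^2 + (-32424140689684241294954424831576074873819789289722882819458993/205520896000000000000000000000000000000000000000000000000000000)*(x - (5709/20000))^3 + (1432445126678014079787890654257272105840254181077259419309/184968806400000000000000000000000000000000000000000000000000)*(x - (5709/20000))^4 + (13734924607245463757991181381683443646770291220494863/513802240000000000000000000000000000000000000000000000)*(x - (5709/20000))^5 + (-200732016612239409926451488120619495777932837/28672000000000000000000000000000000000000000000)*(x - (5709/20000))^6 + (-8499232906356420116691168150369705096835433/4954521600000000000000000000000000000000000000)*(x - (5709/20000))^7 + (105014323638260378948603214002968069597/141557760000000000000000000000000000000000)*(x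 - (5709/20000))^8 + (4638422379345426107095128802718123/86704128000000000000000000000000000000)*(x - (5709/20000))^9 + (-19061322851100731151911313853/433520640000000000000000000000000)*(x - (5709/20000))^10 + (-27315921798287359300283/72253440000000000000000000000)*(x - (5709/20000))^11 + (114325246259809916833/65028096000000000000000000)*(x - (5709/20000))^12 + (-722333383301/25804800000000000000)*(x - (5709/20000))^13 + (-874397093/20321280000000000)*(x - (5709/20000))^14 + (3569/4064256000000)*(x - (5709/20000))^15 + (1/1625702400)*(x - (5709/20000))^16) by field.
rewrite E; clear E.
set (y := x - (5709/20000)). assert (Hy0 : 0 <= y) by (unfold y; lra). assert (Hy1 : y <= (5709/40000)) by (unfold y; lra).
assert (0 <= y^2) by (apply pow_le; lra).
assert (y^3 <= (186071615829/64000000000000)) by (apply Rle_trans with ((5709/40000)^3); [apply pow_incr; lra | simpl; lra]).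
assert (0 <= y^4) by (apply pow_le; lra).
assert (0 <= y^5) by (apply pow_le; lra).
assert (y^6 <= (34622646217214963357241/4096000000000000000000000000)) by (apply Rle_trans with ((5709/40000)^6); [apply pow_incr; lra | simpl; lra]).
assert (y^7 <= (197660687254080225806488869/163840000000000000000000000000000)) by (apply Rle_trans with ((5709/40000)^7); [apply pow_incr; lra | simpl; lra]).
assert (0 <= y^8) by (apply pow_le; lra).
assert (0 <= y^9) by (apply pow_le; lra).
assert (y^10 <= (36779043463237332689010568527932707401/10485760000000000000000000000000000000000000000)) by (apply Rle_trans with ((5709/40000)^10); [apply pow_incr; lra | simpl; lra]).
assert (y^11 <= (209971559131621932321561335725967826552309/419430400000000000000000000000000000000000000000000)) by (apply Rle_trans with ((5709/40000)^11); [apply pow_incr; lra | simpl; lra]).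
assert (0 <= y^12) by (apply pow_le; lra).
assert (y^13 <= (6843536045849590652760238037250372787082737050429/671088640000000000000000000000000000000000000000000000000000)) by (apply Rle_trans with ((5709/40000)^13); [apply pow_incr; lra | simpl; lra]).
assert (y^14 <= (39069747285755313036608198954662378241455345820899161/26843545600000000000000000000000000000000000000000000000000000000)) by (apply Rle_trans with ((5709/40000)^14); [apply pow_incr; lra | simpl; lra]).
assert (0 <= y^15) by (apply pow_le; lra).
assert (0 <= y^16) by (apply pow_le; lra).
lra. Qed.

Lemma posPB_2 : forall x, (17127/40000) <= x <= (5709/10000) -> 0 < (90057879453601/625000000000000) + (-77080343147/187500000000)*x + (780452195546399/1875000000000000)*x^2 + (-26633218951/187500000000)*x^3 + (-523717308046399/14062500000000000)*x^4 + (38156948073/1093750000000)*x^5 + (-402677529453601/196875000000000000)*x^6 + (-370127985581/118125000000000)*x^7 + (85129149057597641/189000000000000000000)*x^8 + (3181758226991/18900000000000000)*x^9 + (-6318086854453601/189000000000000000000)*x^10 + (-39129093817/6300000000000000)*x^11 + (24465775779453601/15876000000000000000000)*x^12 + (10845897331/75600000000000000)*x^13 + (-25893199/635040000000000)*x^14 + (-7849/4064256000000)*x^15 + (1/1625702400)*x^16.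
Proof. intros x Hx.
assert (E : (90057879453601/625000000000000) + (-77080343147/187500000000)*x + (780452195546399/1875000000000000)*x^2 + (-26633218951/187500000000)*x^3 + (-523717308046399/14062500000000000)*x^4 + (38156948073/1093750000000)*x^5 + (-402677529453601/196875000000000000)*x^6 + (-370127985581/118125000000000)*x^7 + (85129149057597641/189000000000000000000)*x^8 + (3181758226991/18900000000000000)*x^9 + (-6318086854453601/189000000000000000000)*x^10 + (-39129093817/6300000000000000)*x^11 + (24465775779453601/15876000000000000000000)*x^12 + (10845897331/75600000000000000)*x^13 + (-25893199/635040000000000)*x^14 + (-7849/4064256000000)*x^15 + (1/1625702400)*x^16 = (27983449483064277620640952498686217839680657620431561090176609893885270906532929/862017116176384000000000000000000000000000000000000000000000000000000000000000000) + (-2192446830787347716510005559752021161593975118481317998409911320039384421/15784004812800000000000000000000000000000000000000000000000000000000000000)*(x - (17127/40000)) + (44107325814933073812097692829280694414401635417326118556559756550835011/202035261603840000000000000000000000000000000000000000000000000000000000)*(x - (17127/40000))^2 + (-187297513681480533282973181357440053033098975876409895011766490591/1262720385024000000000000000000000000000000000000000000000000000000)*(x - (17127/40000))^3 + (18583915778551701620058713343769423213417347570907857088168739/757632231014400000000000000000000000000000000000000000000000000)*(x - (17127/40000))^4 + (2647205350753604298544917170892287488459394316155691609/131533373440000000000000000000000000000000000000000000000)*(x - (17127/40000))^5 + (-40019574530559274859011952878579734410422547470261/4831838208000000000000000000000000000000000000000000)*(x - (17127/40000))^6 + (-535555331269163714874883033663505640694000027/634178764800000000000000000000000000000000000000)*(x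 - (17127/40000))^7 + (1368067358512069784623106474530927324307881/1775700541440000000000000000000000000000000000)*(x - (17127/40000))^8 + (-5944125931705533459259444261134479/693633024000000000000000000000000000000)*(x - (17127/40000))^9 + (-11719482866624751867283782932443/277453209600000000000000000000000000)*(x - (17127/40000))^10 + (1470309620464785096778837/578027520000000000000000000000)*(x - (17127/40000))^11 + (1693868700527391535171/1040449536000000000000000000)*(x - (17127/40000))^12 + (-8599976883779/77414400000000000000)*(x - (17127/40000))^13 + (-12890200643/325140480000000000)*(x - (17127/40000))^14 + (4639/2032128000000)*(x - (17127/40000))^15 + (1/1625702400)*(x - (17127/40000))^16) by field.
rewrite E; clear E.
set (y := x - (17127/40000)). assert (Hy0 : 0 <= y) by (unfold y; lra). assert (Hy1 : y <= (5709/40000)) by (unfold y; lra).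
assert (0 <= y^2) by (apply pow_le; lra).
assert (y^3 <= (186071615829/64000000000000)) by (apply Rle_trans with ((5709/40000)^3); [apply pow_incr; lra | simpl; lra]).
assert (0 <= y^4) by (apply pow_le; lra).
assert (0 <= y^5) by (apply pow_le; lra).
assert (y^6 <= (34622646217214963357241/4096000000000000000000000000)) by (apply Rle_trans with ((5709/40000)^6); [apply pow_incr; lra | simpl; lra]).
assert (y^7 <= (197660687254080225806488869/163840000000000000000000000000000)) by (apply Rle_trans with ((5709/40000)^7); [apply pow_incr; lra | simpl; lra]).
assert (0 <= y^8) by (apply pow_le; lra).
assert (y^9 <= (6442291725913002748118859437367789/262144000000000000000000000000000000000000)) by (apply Rle_trans with ((5709/40000)^9); [apply pow_incr; lra | simpl; lra]).
assert (y^10 <= (36779043463237332689010568527932707401/10485760000000000000000000000000000000000000000)) by (apply Rle_trans with ((5709/40000)^10); [apply pow_incr; lra | simpl; lra]).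
assert (0 <= y^11) by (apply pow_le; lra).
assert (0 <= y^12) by (apply pow_le; lra).
assert (y^13 <= (6843536045849590652760238037250372787082737050429/671088640000000000000000000000000000000000000000000000000000)) by (apply Rle_trans with ((5709/40000)^13); [apply pow_incr; lra | simpl; lra]).
assert (y^14 <= (39069747285755313036608198954662378241455345820899161/26843545600000000000000000000000000000000000000000000000000000000)) by (apply Rle_trans with ((5709/40000)^14); [apply pow_incr; lra | simpl; lra]).
assert (0 <= y^15) by (apply pow_le; lra).
assert (0 <= y^16) by (apply pow_le; lra).
lra. Qed.

Lemma posPB : forall x, (0) <= x <= (5709/10000) -> 0 < (90057879453601/625000000000000) + (-77080343147/187500000000)*x + (780452195546399/1875000000000000)*x^2 + (-26633218951/187500000000)*x^3 + (-523717308046399/14062500000000000)*x^4 + (38156948073/1093750000000)*x^5 + (-402677529453601/196875000000000000)*x^6 + (-370127985581/118125000000000)*x^7 + (85129149057597641/189000000000000000000)*x^8 + (3181758226991/18900000000000000)*x^9 + (-6318086854453601/189000000000000000000)*x^10 + (-39129093817/6300000000000000)*x^11 + (24465775779453601/15876000000000000000000)*x^12 + (10845897331/75600000000000000)*x^13 + (-25893199/635040000000000)*x^14 + (-7849/4064256000000)*x^15 + (1/1625702400)*x^16.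
Proof. intros x Hx.
destruct (Rle_lt_dec x (5709/20000)). { apply posPB_0; lra. }
destruct (Rle_lt_dec x (17127/40000)). { apply posPB_1; lra. }
apply posPB_2; lra. Qed.

Lemma posRB_0 : forall x, (0) <= x <= (3/5) -> 0 < (1/3) + (-1/30)*x^2 + (1/840)*x^4 + (-1/40320)*x^6.
Proof. intros x Hx.
assert (E : (1/3) + (-1/30)*x^2 + (1/840)*x^4 + (-1/40320)*x^6 = (1/3) + (-1/30)*(x - (0))^2 + (1/840)*(x - (0))^4 + (-1/40320)*(x - (0))^6) by field.
rewrite E; clear E.
set (y := x - (0)). assert (Hy0 : 0 <= y) by (unfold y; lra). assert (Hy1 : y <= (3/5)) by (unfold y; lra).
assert (y^2 <= (9/25)) by (apply Rle_trans with ((3/5)^2); [apply pow_incr; lra | simpl; lra]).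
assert (0 <= y^4) by (apply pow_le; lra).
assert (y^6 <= (729/15625)) by (apply Rle_trans with ((3/5)^6); [apply pow_incr; lra | simpl; lra]).
lra. Qed.

Lemma posRB : forall x, (0) <= x <= (3/5) -> 0 < (1/3) + (-1/30)*x^2 + (1/840)*x^4 + (-1/40320)*x^6.
Proof. intros x Hx.
apply posRB_0; lra. Qed.

Lemma posCLpi_0 : forall x, (9/4) <= x <= (117856801/50000000) -> 0 < (1) + (-1/2)*x + (1/24)*x^2 + (-1/720)*x^3.
Proof. intros x Hx.
assert (E : (1) + (-1/2)*x + (1/24)*x^2 + (-1/720)*x^3 = (359/5120) + (-427/1280)*(x - (9/4)) + (31/960)*(x - (9/4))^2 + (-1/720)*(x - (9/4))^3) by field.
rewrite E; clear E.
set (y := x - (9/4)). assert (Hy0 : 0 <= y) by (unfold y; lra). assert (Hy1 : y <= (5356801/50000000)) by (unfold y; lra).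
assert (0 <= y^2) by (apply pow_le; lra).
assert (y^3 <= (153715102552366790401/125000000000000000000000)) by (apply Rle_trans with ((5356801/50000000)^3); [apply pow_incr; lra | simpl; lra]).
lra. Qed.

Lemma posCLpi_1 : forall x, (117856801/50000000) <= x <= (241070403/100000000) -> 0 < (1) + (-1/2)*x + (1/24)*x^2 + (-1/720)*x^3.
Proof. intros x Hx.
assert (E : (1) + (-1/2)*x + (1/24)*x^2 + (-1/720)*x^3 = (3127159865387258795709599/90000000000000000000000000) + (-65344474847317867/200000000000000000)*(x - (117856801/50000000)) + (382143199/12000000000)*(x - (117856801/50000000))^2 + (-1/720)*(x - (117856801/50000000))^3) by field.
rewrite E; clear E.
set (y := x - (117856801/50000000)). assert (Hy0 : 0 <= y) by (unfold y; lra). assert (Hy1 : y <= (5356801/100000000)) by (unfold y; lra).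
assert (0 <= y^2) by (apply pow_le; lra).
assert (y^3 <= (153715102552366790401/1000000000000000000000000)) by (apply Rle_trans with ((5356801/100000000)^3); [apply pow_incr; lra | simpl; lra]).
lra. Qed.

Lemma posCLpi_2 : forall x, (241070403/100000000) <= x <= (61606801/25000000) -> 0 < (1) + (-1/2)*x + (1/24)*x^2 + (-1/720)*x^3.
Proof. intros x Hx.
assert (E : (1) + (-1/2)*x + (1/24)*x^2 + (-1/720)*x^3 = (1386841665984465224628797/80000000000000000000000000) + (-258658044400860803/800000000000000000)*(x - (241070403/100000000)) + (758929597/24000000000)*(x - (241070403/100000000))^2 + (-1/720)*(x - (241070403/100000000))^3) by field.
rewrite E; clear E.
set (y := x - (241070403/100000000)). assert (Hy0 : 0 <= y) by (unfold y; lra). assert (Hy1 : y <= (5356801/100000000)) by (unfold y; lra).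
assert (0 <= y^2) by (apply pow_le; lra).
assert (y^3 <= (153715102552366790401/1000000000000000000000000)) by (apply Rle_trans with ((5356801/100000000)^3); [apply pow_incr; lra | simpl; lra]).
lra. Qed.

Lemma posCLpi : forall x, (9/4) <= x <= (61606801/25000000) -> 0 < (1) + (-1/2)*x + (1/24)*x^2 + (-1/720)*x^3.
Proof. intros x Hx.
destruct (Rle_lt_dec x (117856801/50000000)). { apply posCLpi_0; lra. }
destruct (Rle_lt_dec x (241070403/100000000)). { apply posCLpi_1; lra. }
apply posCLpi_2; lra. Qed.

Lemma posCUpi_0 : forall x, (246772681/100000000) <= x <= (8049953111/3200000000) -> 0 < (-1) + (1/2)*x + (-1/24)*x^2 + (1/720)*x^3 + (-1/40320)*x^4.
Proof. intros x Hx.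
assert (E : (-1) + (1/2)*x + (-1/24)*x^2 + (1/720)*x^3 + (-1/40320)*x^4 = (318204059298678149046626445526879/4032000000000000000000000000000000000) + (3207848199405275590883702759/10080000000000000000000000000)*(x - (246772681/100000000)) + (-2169933249287927761/67200000000000000000)*(x - (246772681/100000000))^2 + (1153227319/1008000000000)*(x - (246772681/100000000))^3 + (-1/40320)*(x - (246772681/100000000))^4) by field.
rewrite E; clear E.
set (y := x - (246772681/100000000)). assert (Hy0 : 0 <= y) by (unfold y; lra). assert (Hy1 : y <= (153227319/3200000000)) by (unfold y; lra).
assert (y^2 <= (23478611287927761/10240000000000000000)) by (apply Rle_trans with ((153227319/3200000000)^2); [apply pow_incr; lra | simpl; lra]).
assert (0 <= y^3) by (apply pow_le; lra).
assert (y^4 <= (551245188009608876142337554473121/104857600000000000000000000000000000000)) by (apply Rle_trans with ((153227319/3200000000)^4); [apply pow_incr; lra | simpl; lra]).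
lra. Qed.

Lemma posCUpi_1 : forall x, (8049953111/3200000000) <= x <= (8356407749/3200000000) -> 0 < (-1) + (1/2)*x + (-1/24)*x^2 + (1/720)*x^3 + (-1/40320)*x^4.
Proof. intros x Hx.
assert (E : (-1) + (1/2)*x + (-1/24)*x^2 + (1/720)*x^3 + (-1/40320)*x^4 = (64446990603505133972410213928123428820959/4227858432000000000000000000000000000000000) + (104095946850944300862979388893369/330301440000000000000000000000000)*(x - (8049953111/3200000000)) + (-2210725946343698578321/68812800000000000000000)*(x - (8049953111/3200000000))^2 + (36750046889/32256000000000)*(x - (8049953111/3200000000))^3 + (-1/40320)*(x - (8049953111/3200000000))^4) by field.
rewrite E; clear E.
set (y := x - (8049953111/3200000000)). assert (Hy0 : 0 <= y) by (unfold y; lra). assert (Hy1 : y <= (153227319/1600000000)) by (unfold y; lra).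
assert (y^2 <= (23478611287927761/2560000000000000000)) by (apply Rle_trans with ((153227319/1600000000)^2); [apply pow_incr; lra | simpl; lra]).
assert (0 <= y^3) by (apply pow_le; lra).
assert (y^4 <= (551245188009608876142337554473121/6553600000000000000000000000000000000)) by (apply Rle_trans with ((153227319/1600000000)^4); [apply pow_incr; lra | simpl; lra]).
lra. Qed.

Lemma posCUpi_2 : forall x, (8356407749/3200000000) <= x <= (358772681/128000000) -> 0 < (-1) + (1/2)*x + (-1/24)*x^2 + (1/720)*x^3 + (-1/40320)*x^4.
Proof. intros x Hx.
assert (E : (-1) + (1/2)*x + (-1/24)*x^2 + (1/720)*x^3 + (-1/40320)*x^4 = (190808240759115343555168007928006696505999/4227858432000000000000000000000000000000000) + (102073810492403751609071626589251/330301440000000000000000000000000)*(x - (8356407749/3200000000)) + (-2188295416157147247001/68812800000000000000000)*(x - (8356407749/3200000000))^2 + (36443592251/32256000000000)*(x - (8356407749/3200000000))^3 + (-1/40320)*(x - (8356407749/3200000000))^4) by field.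
rewrite E; clear E.
set (y := x - (8356407749/3200000000)). assert (Hy0 : 0 <= y) by (unfold y; lra). assert (Hy1 : y <= (153227319/800000000)) by (unfold y; lra).
assert (y^2 <= (23478611287927761/640000000000000000)) by (apply Rle_trans with ((153227319/800000000)^2); [apply pow_incr; lra | simpl; lra]).
assert (0 <= y^3) by (apply pow_le; lra).
assert (y^4 <= (551245188009608876142337554473121/409600000000000000000000000000000000)) by (apply Rle_trans with ((153227319/800000000)^4); [apply pow_incr; lra | simpl; lra]).
lra. Qed.

Lemma posCUpi_3 : forall x, (358772681/128000000) <= x <= (10195135577/3200000000) -> 0 < (-1) + (1/2)*x + (-1/24)*x^2 + (1/720)*x^3 + (-1/40320)*x^4.
Proof. intros x Hx.
assert (E : (-1) + (1/2)*x + (-1/24)*x^2 + (1/720)*x^3 + (-1/40320)*x^4 = (1116562696417528685168003536365526879/10823317585920000000000000000000000000) + (6277822177768926910123702759/21139292160000000000000000000)*(x - (358772681/128000000)) + (-3430396547927927761/110100480000000000000)*(x - (358772681/128000000))^2 + (1433227319/1290240000000)*(x - (358772681/128000000))^3 + (-1/40320)*(x - (358772681/128000000))^4) by field.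
rewrite E; clear E.
set (y := x - (358772681/128000000)). assert (Hy0 : 0 <= y) by (unfold y; lra). assert (Hy1 : y <= (153227319/400000000)) by (unfold y; lra).
assert (y^2 <= (23478611287927761/160000000000000000)) by (apply Rle_trans with ((153227319/400000000)^2); [apply pow_incr; lra | simpl; lra]).
assert (0 <= y^3) by (apply pow_le; lra).
assert (y^4 <= (551245188009608876142337554473121/25600000000000000000000000000000000)) by (apply Rle_trans with ((153227319/400000000)^4); [apply pow_incr; lra | simpl; lra]).
lra. Qed.

Lemma posCUpi_4 : forall x, (10195135577/3200000000) <= x <= (12646772681/3200000000) -> 0 < (-1) + (1/2)*x + (-1/24)*x^2 + (1/720)*x^3 + (-1/40320)*x^4.
Proof. intros x Hx.
assert (E : (-1) + (1/2)*x + (-1/24)*x^2 + (1/720)*x^3 + (-1/40320)*x^4 = (898056142561285966484651023989336850460959/4227858432000000000000000000000000000000000) + (90366193480473219509816631654967/330301440000000000000000000000000)*(x - (10195135577/3200000000)) + (-2057656641734211122929/68812800000000000000000)*(x - (10195135577/3200000000))^2 + (34604864423/32256000000000)*(x - (10195135577/3200000000))^3 + (-1/40320)*(x - (10195135577/3200000000))^4) by field.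
rewrite E; clear E.
set (y := x - (10195135577/3200000000)). assert (Hy0 : 0 <= y) by (unfold y; lra). assert (Hy1 : y <= (153227319/200000000)) by (unfold y; lra).
assert (y^2 <= (23478611287927761/40000000000000000)) by (apply Rle_trans with ((153227319/200000000)^2); [apply pow_incr; lra | simpl; lra]).
assert (0 <= y^3) by (apply pow_le; lra).
assert (y^4 <= (551245188009608876142337554473121/1600000000000000000000000000000000)) by (apply Rle_trans with ((153227319/200000000)^4); [apply pow_incr; lra | simpl; lra]).
lra. Qed.

Lemma posCUpi_5 : forall x, (12646772681/3200000000) <= x <= (4) -> 0 < (-1) + (1/2)*x + (-1/24)*x^2 + (1/720)*x^3 + (-1/40320)*x^4.
Proof. intros x Hx.
assert (E : (-1) + (1/2)*x + (-1/24)*x^2 + (1/720)*x^3 + (-1/40320)*x^4 = (1712034591074157785153987449904510445526879/4227858432000000000000000000000000000000000) + (75841555900349422557363883702759/330301440000000000000000000000000)*(x - (12646772681/3200000000)) + (-1893990027027287927761/68812800000000000000000)*(x - (12646772681/3200000000))^2 + (32153227319/32256000000000)*(x - (12646772681/3200000000))^3 + (-1/40320)*(x - (12646772681/3200000000))^4) by field.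
rewrite E; clear E.
set (y := x - (12646772681/3200000000)). assert (Hy0 : 0 <= y) by (unfold y; lra). assert (Hy1 : y <= (153227319/3200000000)) by (unfold y; lra).
assert (y^2 <= (23478611287927761/10240000000000000000)) by (apply Rle_trans with ((153227319/3200000000)^2); [apply pow_incr; lra | simpl; lra]).
assert (0 <= y^3) by (apply pow_le; lra).
assert (y^4 <= (551245188009608876142337554473121/104857600000000000000000000000000000000)) by (apply Rle_trans with ((153227319/3200000000)^4); [apply pow_incr; lra | simpl; lra]).
lra. Qed.

Lemma posCUpi : forall x, (246772681/100000000) <= x <= (4) -> 0 < (-1) + (1/2)*x + (-1/24)*x^2 + (1/720)*x^3 + (-1/40320)*x^4.
Proof. intros x Hx.
destruct (Rle_lt_dec x (8049953111/3200000000)). { apply posCUpi_0; lra. }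
destruct (Rle_lt_dec x (8356407749/3200000000)). { apply posCUpi_1; lra. }
destruct (Rle_lt_dec x (358772681/128000000)). { apply posCUpi_2; lra. }
destruct (Rle_lt_dec x (10195135577/3200000000)). { apply posCUpi_3; lra. }
destruct (Rle_lt_dec x (12646772681/3200000000)). { apply posCUpi_4; lra. }
apply posCUpi_5; lra. Qed.

Lemma INR_fact_S n : INR (fact (S n)) = INR (S n) * INR (fact n).
Proof. rewrite fact_simpl, mult_INR. reflexivity. Qed.
Ltac appr := cbn [sum_f_R0 Nat.mul Nat.add]; rewrite ?INR_fact_S; cbn [fact]; rewrite ?INR_IZR_INZ; cbv [Z.of_nat PosDef.Pos.of_succ_nat PosDef.Pos.succ]; simpl pow; field.
Lemma cos_lb_eq a : cos_lb a = 1 - a^2/2 + a^4/24 - a^6/720.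
Proof. unfold cos_lb, cos_approx, cos_term. appr. Qed.
Lemma cos_ub_eq a : cos_ub a = 1 - a^2/2 + a^4/24 - a^6/720 + a^8/40320.
Proof. unfold cos_ub, cos_approx, cos_term. appr. Qed.
Lemma sin_lb_eq a : sin_lb a = a - a^3/6 + a^5/120 - a^7/5040.
Proof. unfold sin_lb, sin_approx, sin_term. appr. Qed.
Lemma sin_ub_eq a : sin_ub a = a - a^3/6 + a^5/120 - a^7/5040 + a^9/362880.
Proof. unfold sin_ub, sin_approx, sin_term. appr. Qed.

Lemma PI2_bnd : 15698/10000 < PI/2 < 15709/10000.
Proof.
  assert (H0 := cos_PI2). assert (H1 := PI2_3_2). assert (H2 := PI_4).
  assert (HC := COS (PI/2) ltac:(lra) ltac:(lra)).
  rewrite H0, cos_lb_eq, cos_ub_eq in HC. assert (H3 : PI/2 <= 2) by lra. set (h := PI/2) in *.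
  split.
  - destruct (Rlt_or_le (15698/10000) h) as [|Hle]; [assumption|exfalso].
    assert (P := posCLpi (h^2) ltac:(split; [nra | assert (h*h <= (15698/10000)*(15698/10000)) by (apply Rmult_le_compat; lra); simpl; lra])).
    replace (h^4) with ((h^2)^2) in HC by ring. replace (h^6) with ((h^2)^3) in HC by ring. lra.
  - destruct (Rlt_or_le h (15709/10000)) as [|Hle]; [assumption|exfalso].
    assert (P := posCUpi (h^2) ltac:(split; [assert ((15709/10000)*(15709/10000) <= h*h) by (apply Rmult_le_compat; lra); simpl; lra | nra])).
    replace (h^4) with ((h^2)^2) in HC by ring. replace (h^6) with ((h^2)^3) in HC by ring.
    replace (h^8) with ((h^2)^4) in HC by ring. lra.
Qed.

Lemma atan_lip u v : v <= u -> atan u - atan v <= u - v.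
Proof.
  intros H. destruct (Req_dec u v) as [->|Hne]. lra.
  destruct (MVT_cor1 atan v u derivable_pt_atan ltac:(lra)) as [c [Hc _]].
  rewrite Hc, derive_pt_atan.
  assert (0 < 1 + c²) by (unfold Rsqr; nra).
  assert (1/(1+c²) <= 1). { apply (Rmult_le_reg_r (1+c²)); [lra|]. field_simplify; [|lra]. unfold Rsqr; nra. }
  rewrite <- (Rmult_1_l (u - v)) at 2. apply Rmult_le_compat_r; lra.
Qed.

Lemma div_mono A B C D : 0 <= A <= C -> 0 < D <= B -> A/B <= C/D.
Proof.
  intros [HA HAC] [HD HDB]. unfold Rdiv. apply Rmult_le_compat; auto.
  - left; apply Rinv_0_lt_compat; lra.
  - apply Rinv_le_contravar; lra.
Qed.

Lemma Phi_mono t a x y : 2 <= a -> 0 <= y <= x ->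
  t^2 - a + 2*y + (a-2)*y^2 <= t^2 - a + 2*x + (a-2)*x^2.
Proof. intros Ha [Hy Hxy].
  assert (0 <= (x-y)*((a-2)*(x+y))) by (apply Rmult_le_pos; [lra | apply Rmult_le_pos; lra]).
  assert (E : t^2 - a + 2*x + (a-2)*x^2 - (t^2 - a + 2*y + (a-2)*y^2) = 2*(x-y) + (x-y)*((a-2)*(x+y))) by ring.
  lra. Qed.

Lemma div_nonneg a b : 0 <= a -> 0 < b -> 0 <= a/b.
Proof. intros. unfold Rdiv. apply Rmult_le_pos; [lra|left; apply Rinv_0_lt_compat; lra]. Qed.
Lemma div_le1 a b : a <= b -> 0 < b -> a/b <= 1.
Proof. intros. apply (Rmult_le_reg_r b); [lra|]. unfold Rdiv. rewrite Rmult_assoc, Rinv_l; lra. Qed.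

Lemma regA t : 0 < t <= 1 ->
  0 <= t^2 - (PI/2)^2 + 2*(t*cos t/sin t) + ((PI/2)^2 - 2)*(t*cos t/sin t)^2.
Proof.
  intros [Ht0 Ht1]. assert (Hb := PI2_bnd).
  assert (HS : 0 < sin t) by (apply sin_gt_0; lra).
  assert (HSB := SIN t ltac:(lra) ltac:(lra)).
  assert (HCB := COS t ltac:(lra) ltac:(lra)).
  rewrite sin_ub_eq in HSB. rewrite cos_lb_eq in HCB.
  set (p := 1 - t^2/2 + t^4/24 - t^6/720) in *.
  set (q := t - t^3/6 + t^5/120 - t^7/5040 + t^9/362880) in *.
  assert (Hu : 0 <= t^2 <= 1) by (split; nra).
  assert (Hp : 0 < p).
  { pose proof (posCL (t^2) Hu) as H. unfold p.
    replace (t^4) with ((t^2)^2) by ring. replace (t^6) with ((t^2)^3) by ring. lra. }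
  assert (Hq : 0 < q) by lra.
  assert (Hqp : t*p <= q).
  { pose proof (posRA (t^2) Hu) as H.
    match type of H with 0 < ?E => assert (Id : q - t*p = t^3 * E) by (unfold p, q; field) end.
    assert (0 < t^3) by (apply pow_lt; lra). nra. }
  set (y := t*p/q).
  assert (Hy0 : 0 <= y) by (unfold y; apply div_nonneg; nra).
  assert (Hy1 : y <= 1) by (unfold y; apply div_le1; lra).
  assert (Hyx : y <= t*cos t/sin t) by (unfold y; apply div_mono; nra).
  set (h := PI/2) in *.
  assert (Hh2 : 2 <= h^2) by nra.
  eapply Rle_trans; [|apply (Phi_mono t (h^2) _ y Hh2); lra].
  assert (Hau : h^2 <= (15709/10000)^2) by (simpl; nra).
  assert (0 <= 1 - y^2) by nra.
  assert (Hm : t^2 + 2*y - 2*y^2 - (15709/10000)^2*(1 - y^2) <= t^2 - h^2 + 2*y + (h^2-2)*y^2) by nra.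
  eapply Rle_trans; [|exact Hm].
  pose proof (posQA (t^2) Hu) as HQA.
  match type of HQA with 0 < ?E =>
    assert (Id2 : t^2*q^2 + 2*t*p*q - 2*t^2*p^2 - (15709/10000)^2*(q^2 - t^2*p^2) = t^4 * E)
      by (unfold p, q; field);
    assert (Id : t^2 + 2*y - 2*y^2 - (15709/10000)^2*(1 - y^2) = t^4 * E / q^2)
      by (rewrite <- Id2; unfold y; field; lra) end.
  rewrite Id. apply div_nonneg; [|nra].
  apply Rmult_le_pos; [nra|lra].
Qed.

Lemma regB t : 1 <= t < PI/2 ->
  0 <= t^2 - (PI/2)^2 + 2*(t*cos t/sin t) + ((PI/2)^2 - 2)*(t*cos t/sin t)^2.
Proof.
  intros [Ht0 Ht1]. assert (Hb := PI2_bnd).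
  set (s := PI/2 - t).
  assert (Hs : 0 < s <= 5709/10000) by (unfold s; lra).
  assert (Et : t = PI/2 - s) by (unfold s; ring).
  assert (Ec : cos t = sin s) by (rewrite Et; apply cos_shift).
  assert (Es : sin t = cos s) by (rewrite Et; apply sin_shift).
  rewrite Ec, Es.
  assert (HSB := SIN s ltac:(lra) ltac:(lra)).
  assert (HCB := COS s ltac:(lra) ltac:(lra)).
  assert (Hsl := sin_lb_gt_0 s ltac:(lra) ltac:(lra)).
  assert (Hc0 : 0 < cos s) by (apply cos_gt_0; lra).
  rewrite sin_lb_eq in HSB, Hsl. rewrite cos_ub_eq in HCB.
  set (sl := s - s^3/6 + s^5/120 - s^7/5040) in *.
  set (cu := 1 - s^2/2 + s^4/24 - s^6/720 + s^8/40320) in *.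
  assert (Hcu : 0 < cu) by lra.
  assert (Hlc : s*cu <= sl).
  { pose proof (posRB s ltac:(lra)) as HR.
    match type of HR with 0 < ?E => assert (Id : sl - s*cu = s^3 * E) by (unfold sl, cu; field) end.
    assert (0 < s^3) by (apply pow_lt; lra). nra. }
  set (l := sl/cu).
  assert (Hls : s <= l).
  { unfold l. apply (Rmult_le_reg_r cu); [lra|]. unfold Rdiv. rewrite Rmult_assoc, Rinv_l; lra. }
  assert (Hyx : t*l <= t*sin s/cos s).
  { replace (t*l) with (t*sl/cu) by (unfold l; field; lra).
    apply div_mono; split; nra. }
  set (h := PI/2) in *.
  assert (Hh2 : 2 <= h^2) by nra.
  eapply Rle_trans; [|apply (Phi_mono t (h^2) _ (t*l) Hh2); split; [nra|exact Hyx]].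
  set (hl := 15698/10000) in *.
  assert (Hmono : s^2 - 2*hl*s + 2*(hl-s)*l + (hl^2-2)*(hl-s)^2*l^2
                  <= t^2 - h^2 + 2*(t*l) + (h^2-2)*(t*l)^2).
  { assert (D : t^2 - h^2 + 2*(t*l) + (h^2-2)*(t*l)^2 - (s^2 - 2*hl*s + 2*(hl-s)*l + (hl^2-2)*(hl-s)^2*l^2)
              = 2*(h-hl)*(l-s) + ((h^2-2)*(h-s)^2 - (hl^2-2)*(hl-s)^2)*l^2)
      by (rewrite Et; fold h; ring).
    assert (K1 : 0 <= 2*(h-hl)*(l-s)) by (apply Rmult_le_pos; lra).
    assert (K2 : (hl^2-2)*(hl-s)^2 <= (h^2-2)*(h-s)^2).
    { apply Rmult_le_compat.
      - unfold hl; simpl; lra.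
      - apply pow2_ge_0.
      - assert (hl*hl <= h*h) by (apply Rmult_le_compat; unfold hl in *; lra). simpl; lra.
      - assert ((hl-s)*(hl-s) <= (h-s)*(h-s)) by (apply Rmult_le_compat; unfold hl in *; lra). simpl; lra. }
    assert (K3 : 0 <= ((h^2-2)*(h-s)^2 - (hl^2-2)*(hl-s)^2)*l^2) by (apply Rmult_le_pos; [lra|apply pow2_ge_0]).
    lra. }
  eapply Rle_trans; [|exact Hmono].
  pose proof (posPB s ltac:(lra)) as HPB.
  match type of HPB with 0 < ?E =>
    assert (Id2 : s^2*cu^2 - 2*hl*s*cu^2 + 2*(hl-s)*sl*cu + (hl^2-2)*(hl-s)^2*sl^2 = s^2 * E)
      by (unfold hl, sl, cu; field);
    assert (Id : s^2 - 2*hl*s + 2*(hl-s)*l + (hl^2-2)*(hl-s)^2*l^2 = s^2 * E / cu^2)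
      by (rewrite <- Id2; unfold l; field; lra) end.
  rewrite Id. apply div_nonneg; [|nra].
  apply Rmult_le_pos; [nra|lra].
Qed.

Lemma Phi_nonneg t : 0 < t < PI/2 ->
  0 <= t^2 - (PI/2)^2 + 2*(t*cos t/sin t) + ((PI/2)^2 - 2)*(t*cos t/sin t)^2.
Proof. intros H. destruct (Rle_lt_dec t 1). apply regA; lra. apply regB; lra. Qed.

Theorem mainTheorem19 (delta : R) :
  delta > PI ^ 2 / 4 - 1 ->
  forall alpha : R, 0 < alpha < 1 -> F1inv alpha > F2 alpha delta.
Proof.
  intros Hd alpha [Ha0 Ha1].
  assert (Hb := PI2_bnd). assert (HPI := PI_RGT_0).
  set (t := PI*alpha/2).
  assert (Et : t = PI*alpha/2) by reflexivity. clearbody t.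
  assert (Ht : 0 < t < PI/2) by (rewrite Et; split; nra).
  assert (HS : 0 < sin t) by (apply sin_gt_0; lra).
  assert (HC : 0 < cos t) by (apply cos_gt_0; lra).
  set (s1 := alpha*cos t/sin t).
  assert (Hs1 : 0 < s1) by (unfold s1; apply Rdiv_lt_0_compat; nra).
  assert (HF1 : F1inv alpha = s1^2) by (unfold F1inv, s1, tan; rewrite <- Et; field; lra).
  set (c := delta - 1).
  assert (Hc : c > (PI/2)^2 - 2) by (unfold c; replace ((PI/2)^2) with (PI^2/4) by field; lra).
  assert (Hh2 : 2 <= (PI/2)^2) by (set (h:=PI/2) in *; nra).
  assert (Hc0 : 0 < c) by lra.
  assert (K : 0 < c*s1^2 + alpha^2 - 1 + 4*s1/PI).
  { pose proof (Phi_nonneg t Ht) as HP.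
    assert (Ex : t*cos t/sin t = PI/2*s1) by (unfold s1; rewrite Et at 1; field; lra).
    rewrite Ex in HP.
    assert (E2 : t^2 - (PI/2)^2 + 2*(PI/2*s1) + ((PI/2)^2 - 2)*(PI/2*s1)^2
               = (PI/2)^2 * (alpha^2 - 1 + 4*s1/PI + ((PI/2)^2-2)*s1^2))
      by (rewrite Et; field; lra).
    rewrite E2 in HP.
    assert (0 <= alpha^2 - 1 + 4*s1/PI + ((PI/2)^2-2)*s1^2).
    { apply (Rmult_le_reg_l ((PI/2)^2)); nra. }
    assert (0 < (c - ((PI/2)^2 - 2))*s1^2) by (apply Rmult_lt_0_compat; nra).
    nra. }
  set (Hf := fun sg => c*sg^2 - (1-alpha)^2 + 4*sg/PI - 4*alpha/PI * atan (sg/alpha)).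
  assert (Hs1pos : 0 < Hf s1).
  { unfold Hf.
    assert (Eat : atan (s1/alpha) = PI/2 - t).
    { assert (Hti : s1/alpha = / tan t) by (unfold s1, tan; field; lra).
      assert (Htn : 0 < tan t) by (unfold tan; apply Rdiv_lt_0_compat; lra).
      rewrite Hti, atan_inv, atan_tan; auto; lra. }
    rewrite Eat.
    assert (E : 4*alpha/PI*(PI/2 - t) = 2*alpha - 2*alpha^2) by (rewrite Et; field; lra).
    rewrite E. nra. }
  assert (Hmono : forall sg, s1 <= sg -> Hf s1 <= Hf sg).
  { intros sg Hsg. unfold Hf.
    assert (A := atan_lip (sg/alpha) (s1/alpha) ltac:(apply Rmult_le_compat_r; [left; apply Rinv_0_lt_compat; lra| lra])).
    assert (B : 4*alpha/PI*(atan (sg/alpha) - atan (s1/alpha)) <= 4*alpha/PI*(sg/alpha - s1/alpha)).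
    { apply Rmult_le_compat_l; [|exact A]. apply Rmult_le_pos; [lra|left; apply Rinv_0_lt_compat; lra]. }
    assert (E : 4*alpha/PI*(sg/alpha - s1/alpha) = 4*sg/PI - 4*s1/PI) by (field; lra).
    assert (0 <= c*(sg^2 - s1^2)) by (apply Rmult_le_pos; nra).
    nra. }
  assert (Hsol : forall s, 0 <= s /\ s = psi2 alpha s delta -> s < s1^2).
  { intros s [Hs0 Heq].
    destruct (Req_dec s 0) as [->|Hsn]; [nra|].
    set (sg := sqrt s) in *.
    assert (Hsg : 0 < sg) by (apply sqrt_lt_R0; lra).
    assert (Hsg2 : sg^2 = s) by (unfold sg; simpl; rewrite Rmult_1_r; apply sqrt_sqrt; lra).
    unfold psi2 in Heq. fold sg in Heq.
    unfold atan_ratio in Heq. destruct (Req_EM_T sg 0) as [e|_]; [lra|].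
    replace (alpha/sg) with (/(sg/alpha)) in Heq by (field; lra).
    rewrite atan_inv in Heq by (apply Rdiv_lt_0_compat; lra).
    set (A := atan (sg/alpha)) in *.
    assert (Hd0 : 0 < delta) by nra.
    assert (E1 : delta*s = alpha^2 + s + 1 - 4*sg/PI - 4*alpha/PI*(PI/2 - A))
      by (rewrite Heq at 1; field; lra).
    assert (E2 : 4*alpha/PI*(PI/2 - A) = 2*alpha - 4*alpha/PI*A) by (field; lra).
    assert (H0 : Hf sg = 0) by (unfold Hf; fold A; unfold c; rewrite Hsg2; lra).
    destruct (Rlt_or_le sg s1) as [Hlt|Hge].
    - rewrite <- Hsg2. nra.
    - exfalso. pose proof (Hmono sg Hge). lra. }
  assert (Hex : exists s, 0 <= s /\ s = psi2 alpha s delta).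
  { assert (Hcont : continuity Hf).
    { unfold Hf. intros x.
      apply continuity_pt_minus.
      - reg.
      - apply continuity_pt_mult; [reg|].
        apply (continuity_pt_comp (fun sg => sg/alpha) atan).
        + reg.
        + apply derivable_continuous_pt, derivable_pt_atan. }
    assert (Hf0 : Hf 0 < 0).
    { unfold Hf. replace (0/alpha) with 0 by (field; lra). rewrite atan_0. nra. }
    assert (Hf1 : 0 < Hf (s1+1)) by (pose proof (Hmono (s1+1) ltac:(lra)); lra).
    destruct (IVT Hf 0 (s1+1) Hcont ltac:(lra) Hf0 Hf1) as [z [[Hz0 Hz1] Hz]].
    assert (Hzp : 0 < z) by (destruct Hz0 as [|<-]; [auto|lra]).
    exists (z^2). split; [nra|].
    unfold psi2. rewrite sqrt_pow2 by lra.
    unfold atan_ratio. destruct (Req_EM_T z 0) as [e|_]; [lra|].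
    replace (alpha/z) with (/(z/alpha)) by (field; lra).
    rewrite atan_inv by (apply Rdiv_lt_0_compat; lra).
    unfold Hf in Hz. set (A := atan (z/alpha)) in *.
    assert (Hd0 : 0 < delta) by nra.
    assert (E2 : 4*alpha/PI*(PI/2 - A) = 2*alpha - 4*alpha/PI*A) by (field; lra).
    assert (E3 : alpha ^ 2 + z^2 + 1 - 4 * z / PI - 4 * alpha / PI * (PI / 2 - A) = delta * z^2)
      by (unfold c in Hz; lra).
    rewrite E3. field. lra. }
  unfold F2.
  pose proof (epsilon_spec (inhabits 0) (fun s => 0 <= s /\ s = psi2 alpha s delta) Hex) as HE.
  apply Hsol in HE. rewrite HF1. lra.
Qed.
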